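(* For every oriented link $L$, $$\mathcal A_{\mathcal Q}(L)=\sup_{\mathbb X\in\mathcal Q_{\mathcal F}}a_{\mathbb X}(L,\mathcal P_m,\bar 1),$$ where $\bar 1$ assigns $1$ to every component. More precisely, for every odd prime $p$, every $z\ge1$ and every irreducible $h(t)\in\Lambda_p$ of positive breadth there is an irreducible $h'(t)\in\Lambda_p$ of positive breadth with $a_{(\mathbb F(p,h),* )}(L,\mathcal P_m,\bar z)\le a_{(\mathbb F(p,h'),* )}(L,\mathcal P_m,\bar 1)$, where $\bar z$ assigns $z$ to all components. In particular, for every knot $K$ there exists $\mathbb X\in\mathcal Q_{\mathcal F}$ with $\mathcal A_{\mathcal Q}(K)=a_{\mathbb X}(K,1)$.
   Context: A quandle is a set with operation $*$ satisfying $a*a=a$, $(a*b)*c=(a*c)*(b*c)$ and bijectivity of $x\mapsto x*b$; $a*^0b=a$, $a*^nb=(a*^{n-1}b)*b$. For an odd prime $p$, $\Lambda_p=\mathbb Z_p[t,t^{-1}]$; for $h\in\Lambda_p$ irreducible of positive breadth (breadth = highest minus lowest exponent), $\mathbb F(p,h)=\Lambda_p/(h)$, $\bar t$ the class of $t$, $\mathbb X=(\mathbb F(p,h),* )$ with $a*b=\bar ta+(1-\bar t)b$; $\mathcal Q_{\mathcal F}$ is the set of such. For an oriented link $L$, $\mathcal P_m=(L)$. An $\mathbb X$-coloring of a diagram of $L$ with label $z\ge0$ on all components assigns elements of $\mathbb X$ to arcs so that at each crossing with over-arc color $b$ the under-arcs on the right/left of the oriented over-arc have colors $a$ and $a*^zb$;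 colorings form a vector space of dimension $d$ and $a_{\mathbb X}(L,\mathcal P_m,\bar z)=d-1$ (for a knot, $a_{\mathbb X}(K,z)$). $\mathcal A_{\mathcal Q}(L)=\sup a_{\mathbb X}(L,\mathcal P_m,\bar z)$ over $\mathbb X\in\mathcal Q_{\mathcal F}$ and $z\ge0$; this is finite (bounded by the tunnel number). *)

(* Defs.v *)
From HB Require Import structures.
From mathcomp Require Import all_boot all_order all_algebra all_fingroup all_field.
Set Implicit Arguments.
Unset Strict Implicit.
Unset Printing Implicit Defensive.
Import GRing.Theory.
Local Open Scope ring_scope.

(* A diagram has [narcs D] arcs, numbered by 'I_(narcs D), and a list of   *)
(* crossings.  A crossing (o, i, j, s) has over-arc o; the under-strand    *)
(* enters the crossing along arc i and leaves along arc j; s = true for a  *)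
(* positive crossing, in which the under-strand passes from the RIGHT to   *)
(* the LEFT of the oriented over-arc (so i is on the right, j on the       *)
(* left), s = false for a negative crossing (j on the right, i on left).   *)
Record diagram := Diagram {
  narcs : nat;
  xings : seq ('I_narcs * 'I_narcs * 'I_narcs * bool) }.

Definition x_over n (x : 'I_n * 'I_n * 'I_n * bool) := x.1.1.1.
Definition x_in n (x : 'I_n * 'I_n * 'I_n * bool) := x.1.1.2.
Definition x_out n (x : 'I_n * 'I_n * 'I_n * bool) := x.1.2.
Definition x_pos n (x : 'I_n * 'I_n * 'I_n * bool) := x.2.
Definition x_right n (x : 'I_n * 'I_n * 'I_n * bool) :=
  if x_pos x then x_in x else x_out x.
Definition x_left n (x : 'I_n * 'I_n * 'I_n * bool) :=
  if x_pos x then x_out x else x_in x.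

(* Well-formedness: at least one arc; every arc ends at most once and      *)
(* starts at most once as an under-arc, and an arc ends at an undercrossing*)
(* iff it starts at one (otherwise it is a closed crossing-free-below loop)*)
Definition well_formed (D : diagram) : bool :=
  [&& (0 < narcs D)%N,
      uniq [seq x_in x | x <- xings D],
      uniq [seq x_out x | x <- xings D] &
      [forall i : 'I_(narcs D),
         (i \in [seq x_in x | x <- xings D]) ==
         (i \in [seq x_out x | x <- xings D])]].

Definition arc_next (D : diagram) (i : 'I_(narcs D)) : 'I_(narcs D) :=
  match [seq x <- xings D | x_in x == i] with
  | x :: _ => x_out x
  | [::] => i
  end.

Definition is_knot_diagram (D : diagram) : bool :=
  [forall i : 'I_(narcs D), forall j : 'I_(narcs D), fconnect (@arc_next D) i j].

Definition qpow (X : Type) (op : X -> X -> X) (z : nat) (a b : X) : X :=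
  iter z (fun x => op x b) a.

Definition is_coloring (X : eqType) (op : X -> X -> X) (D : diagram) (z : nat)
  (col : 'I_(narcs D) -> X) : bool :=
  all (fun x => col (x_left x) == qpow op z (col (x_right x)) (col (x_over x)))
      (xings D).
Arguments is_coloring {X} op D z col.

Definition alex_op (F : fieldType) (t : F) (a b : F) : F := t * a + (1 - t) * b.

(* F(p,h) = Lambda_p/(h).  Every nonzero ideal (h) of Lambda_p is generated *)
(* by a unique monic polynomial h in F_p[t] with h(0) <> 0, and for such h  *)
(* Lambda_p/(h) = F_p[t]/(h); for h irreducible this is the field           *)
(* {poly %/ h with hI}, in which t-bar is 'qX.                              *)
Definition Fph (p : nat) (h : {poly 'F_p}) (hI : monic_irreducible_poly h) :=
  {poly %/ h with hI}.

Definition tbar (p : nat) (h : {poly 'F_p}) (hI : monic_irreducible_poly h)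
  : Fph hI := 'qX.

Definition colorings (p : nat) (h : {poly 'F_p}) (hI : monic_irreducible_poly h)
  (D : diagram) (z : nat) : {set 'rV[Fph hI]_(narcs D)} :=
  [set c : 'rV[Fph hI]_(narcs D) |
     is_coloring (alex_op (tbar hI)) D z (fun i => c 0 i) ].

Definition coloring_dim (p : nat) (h : {poly 'F_p}) (hI : monic_irreducible_poly h)
  (D : diagram) (z : nat) : nat :=
  \dim <<enum (colorings hI D z)>>%VS.

Definition a_inv (p : nat) (h : {poly 'F_p}) (hI : monic_irreducible_poly h)
  (D : diagram) (z : nat) : nat :=
  (coloring_dim hI D z).-1.

(* breadth of h as an element of Lambda_p (h monic, h(0) <> 0) *)
Definition breadth (p : nat) (h : {poly 'F_p}) : nat := (size h).-1.

Definition admissible (p : nat) (h : {poly 'F_p}) : Prop :=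
  [/\ prime p, odd p, h.[0] != 0 & (0 < breadth h)%N].

(* Main.v *)
Require Import Defs.
From HB Require Import structures.
From mathcomp Require Import all_boot all_order all_algebra all_fingroup all_field.
From mathcomp Require Import mxabelem ring.
Set Implicit Arguments.
Unset Strict Implicit.
Unset Printing Implicit Defensive.
Local Open Scope ring_scope.
Import GRing.Theory.

Lemma dim_ker (F : finFieldType) n k (M : 'M[F]_(n,k)) :
  \dim <<enum [set c : 'rV[F]_n | c *m M == 0%R]>>%VS = (n - \rank M)%N.
Proof.
set S := [set c : 'rV[F]_n | c *m M == 0].
set V := (<<enum S>>)%VS.
have memV c : (c \in V) = (c \in S).
  apply/idP/idP; last by move=> cS; apply: memv_span; rewrite mem_enum.
  move=> cV.
  have := @coord_span _ _ _ (in_tuple (enum S)) c cV => ->.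
  rewrite inE mulmx_suml big1 // => i _.
  rewrite -scalemxAl.
  have : (in_tuple (enum S))`_i \in S.
    by rewrite -mem_enum; apply: mem_nth; exact: ltn_ord.
  by rewrite inE => /eqP ->; rewrite scaler0.
have cV : #|V| = #|S| by apply: eq_card => c; rewrite memV.
have cS : #|S| = #|rowg (kermx M)|.
  by apply: eq_card => c; rewrite !inE; apply/eqP/sub_kermxP.
move: cV; rewrite card_vspace cS card_rowg mxrank_ker.
apply: expnI.
exact: card_finNzRing_gt1.
Qed.
Definition cmx (F : comNzRingType) (D : diagram) (u : F) : 'M[F]_(narcs D, size (xings D)) :=
  \matrix_(i, j) (let x := tnth (in_tuple (xings D)) j in
    (i == x_left x)%:R - u * (i == x_right x)%:R - (1 - u) * (i == x_over x)%:R).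

Lemma sum_delta (F : comNzRingType) n (c : 'rV[F]_n) (a : 'I_n) :
  \sum_i c 0 i * (i == a)%:R = c 0 a.
Proof.
rewrite (bigD1 a) //= eqxx mulr1 big1 ?addr0 // => i /negbTE ->.
by rewrite mulr0.
Qed.

Lemma mul_cmx (F : comNzRingType) (D : diagram) (u : F) (c : 'rV[F]_(narcs D)) j :
  let x := tnth (in_tuple (xings D)) j in
  (c *m cmx D u) 0 j = c 0 (x_left x) - u * c 0 (x_right x) - (1 - u) * c 0 (x_over x).
Proof.
move=> x; rewrite !mxE.
under eq_bigr => i _ do rewrite mxE mulrBr mulrBr (mulrCA _ u) (mulrCA _ (1 - u)).
by rewrite !sumrB -!mulr_sumr !sum_delta.
Qed.

Lemma qpowE (F : fieldType) (t : F) z a b :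
  qpow (alex_op t) z a b = t ^+ z * a + (1 - t ^+ z) * b.
Proof.
elim: z => [|z IH]; first by rewrite /qpow /= expr0 mul1r subrr mul0r addr0.
rewrite /qpow iterS -/(qpow _ _ _ _) IH /alex_op exprS; ring.
Qed.

Lemma coloring_ker (F : fieldType) (t : F) (D : diagram) z (c : 'rV[F]_(narcs D)) :
  is_coloring (alex_op t) D z (fun i => c 0 i) = (c *m cmx D (t ^+ z) == 0).
Proof.
rewrite /is_coloring; apply/allP/eqP.
  move=> H; apply/rowP => j; rewrite [RHS]mxE mul_cmx.
  have /eqP -> := H _ (mem_tnth j (in_tuple (xings D))).
  rewrite qpowE; ring.
move=> H x xin; have /tnthP [j ->] : x \in in_tuple (xings D) by []. apply/eqP.
have := congr1 (fun m : 'M[F]_(1, size (xings D)) => m 0 j) H; rewrite mul_cmx mxE qpowE => /eqP.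
by rewrite -addrA -opprD subr_eq0 => /eqP.
Qed.

Lemma a_invE p (h : {poly 'F_p}) (hI : monic_irreducible_poly h) D z :
  a_inv hI D z = (narcs D - \rank (cmx D (tbar hI ^+ z))).-1.
Proof.
rewrite /a_inv /coloring_dim.
have -> : colorings hI D z = [set c | c *m cmx D (tbar hI ^+ z) == 0].
  by apply/setP=> c; rewrite !inE coloring_ker.
by rewrite dim_ker.
Qed.

Section Ev.
Variables (p : nat) (h : {poly 'F_p}) (hI : monic_irreducible_poly h).
Local Notation L := (Fph hI).
Variable s : L.
Definition ev (q : {poly 'F_p}) : L := (map_poly (in_alg L) q).[s].
Lemma evM a b : ev (a * b) = ev a * ev b.
Proof. by rewrite /ev rmorphM hornerM. Qed.
Lemma evB a b : ev (a - b) = ev a - ev b.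
Proof. by rewrite /ev rmorphB hornerD hornerN. Qed.
Lemma evC c : ev c%:P = c%:A.
Proof. by rewrite /ev map_polyC hornerC. Qed.
Lemma evX : ev 'X = s.
Proof. by rewrite /ev map_polyX hornerX. Qed.
Lemma ev1 : ev 1 = 1.
Proof. by rewrite /ev rmorph1 hornerC. Qed.
Lemma evXn n : ev ('X^n) = s ^+ n.
Proof. by elim: n => [|n IH]; rewrite ?expr0 ?ev1 // exprS evM evX IH -exprS. Qed.
End Ev.

From Stdlib Require Import Classical.

Section MinPoly.
Variables (p : nat) (h : {poly 'F_p}) (hI : monic_irreducible_poly h).
Local Notation L := (Fph hI).
Variable s : L.
Hypothesis s0 : s != 0.

Lemma ev_root_exists : exists m, m != 0 /\ ev s m = 0.
Proof.
have cg := card_finNzRing_gt1 L.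
have n0 : (0 < #|L|.-1)%N by rewrite -ltnS prednK // ltnW.
exists ('X^(#|L|.-1) - 1); split; first exact/monic_neq0/monic_Xn_sub_1.
rewrite evB ev1 evXn.
apply/eqP; rewrite subr_eq0; apply/eqP; apply: (mulfI s0).
by rewrite -exprS prednK ?expf_card ?mulr1 // ltnW.
Qed.

Lemma min_root N : forall m : {poly 'F_p}, (size m <= N)%N -> m != 0 -> ev s m = 0 ->
  exists m', [/\ m' \is monic, ev s m' = 0 &
    forall q : {poly 'F_p}, q != 0 -> ev s q = 0 -> (size m' <= size q)%N].
Proof.
elim: N => [|N IH] m sm m0 mr.
  by move: m0; rewrite -size_poly_eq0; move: sm; rewrite leqn0 => ->.
case: (classic (exists q, [/\ q != 0, ev s q = 0 & (size q < size m)%N])).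
  move=> [q [q0 qr qs]]; apply: (IH q) => //.
  by rewrite -ltnS (leq_trans qs sm).
move=> nq.
have lc0 : lead_coef m != 0 by rewrite lead_coef_eq0.
exists ((lead_coef m)^-1 *: m); split.
- by rewrite monicE lead_coefZ mulVf.
- by rewrite -mul_polyC evM mr mulr0.
- move=> q q0 qr; rewrite size_scale ?invr_eq0 //.
  rewrite leqNgt; apply/negP => qs; apply: nq; exists q; split => //.
Qed.

Lemma min_irr (m : {poly 'F_p}) : m \is monic -> ev s m = 0 ->
  (forall q : {poly 'F_p}, q != 0 -> ev s q = 0 -> (size m <= size q)%N) -> irreducible_poly m.
Proof.
move=> mm mr mmin.
have m0 : m != 0 by apply: monic_neq0.
split.
  rewrite ltnNge; apply/negP => sm.
  have : size m == 1%N.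
    by rewrite eqn_leq sm /= size_poly_gt0.
  move/size_poly1P => [c c0 mc].
  move: mr; rewrite mc evC => /eqP.
  by rewrite scaler_eq0 oner_eq0 orbF (negPf c0).
move=> q sq1 qdm.
have q0 : q != 0.
  by apply: contraNneq m0 => q0; move: qdm; rewrite q0 dvd0p.
have e := divpK qdm.
have : ev s (m %/ q) * ev s q = 0 by rewrite -evM e.
move/eqP; rewrite mulf_eq0 => /orP [/eqP cr | /eqP qr].
  have c0 : m %/ q != 0.
    by apply: contraNneq m0 => c0; rewrite -e c0 mul0r.
  have := mmin _ c0 cr.
  rewrite -{1}e size_mul //.
  have : (0 < size q)%N by rewrite size_poly_gt0.
  move: sq1; case: (size q) => [|[|k]] //= _ _.
  by rewrite !addnS /= ltnNge leq_addr.
rewrite -dvdp_size_eqp // eqn_leq dvdp_leq //=.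
exact: (mmin q q0 qr).
Qed.

Lemma min_0 (m : {poly 'F_p}) : irreducible_poly m -> m \is monic -> ev s m = 0 -> m.[0] != 0.
Proof.
move=> mI mm mr; apply/negP => /eqP m00.
have : ('X - 0%:P) %| m by rewrite -root_factor_theorem /root m00.
rewrite subr0 => Xdm.
have := mI.2 'X; rewrite size_polyX => /(_ isT Xdm).
rewrite eqp_monic ?monicX // => /eqP Xm.
by move: mr; rewrite -Xm evX; apply/eqP.
Qed.

End MinPoly.

Section Phi.
Variables (p : nat) (h : {poly 'F_p}) (hI : monic_irreducible_poly h).
Variable s : Fph hI.
Variables (m : {poly 'F_p}) (mI : monic_irreducible_poly m).
Hypothesis mr : ev s m = 0.

Lemma ev_rmod P : ev s (Pdiv.CommonRing.rmodp P (mk_monic m)) = ev s P.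
Proof.
rewrite (mk_monicE mI).
rewrite [in RHS](Pdiv.RingMonic.rdivp_eq mI.2 P).
by rewrite /ev rmorphD hornerD -/(ev s _) -/(ev s _) evM mr mulr0 add0r.
Qed.

Definition phi (q : Fph mI) : Fph hI := ev s (val q).

Lemma phi_zmod : zmod_morphism phi.
Proof. by move=> a b; rewrite /phi -evB. Qed.

Lemma phi_monoid : monoid_morphism phi.
Proof.
split.
  by rewrite /phi /= evC scale1r.
by move=> a b; rewrite /phi /= ev_rmod evM.
Qed.

HB.instance Definition _ := GRing.isZmodMorphism.Build (Fph mI) (Fph hI) phi phi_zmod.
HB.instance Definition _ := GRing.isMonoidMorphism.Build (Fph mI) (Fph hI) phi phi_monoid.

Lemma phi_t : phi (tbar mI) = s.
Proof. by rewrite /phi /tbar /= ev_rmod evX. Qed.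

Lemma rank_phi D : \rank (cmx D (tbar mI)) = \rank (cmx D s).
Proof.
rewrite -(mxrank_map phi); congr (\rank _).
apply/matrixP => i j; rewrite !mxE /=.
by rewrite rmorphB rmorphB !rmorphM rmorphB rmorph1 !rmorph_nat -phi_t.
Qed.

End Phi.

Lemma tbar_neq0 p (h : {poly 'F_p}) (hI : monic_irreducible_poly h) :
  h.[0] != 0 -> tbar hI != 0.
Proof.
move=> h0; apply/negP => /eqP t0.
have : val (tbar hI) = 0 by rewrite t0.
rewrite /tbar /= (mk_monicE hI) => r0.
have hX : h %| 'X by apply/modp_eq0P; rewrite modpE r0 scaler0.
have sh : size h = 2%N.
  apply/eqP; rewrite eqn_leq hI.1.1 andbT.
  by rewrite -[X in (_ <= X)%N](size_polyX 'F_p) dvdp_leq ?polyX_eq0.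
have : h %= 'X by rewrite -dvdp_size_eqp // size_polyX sh.
rewrite eqp_monic ?monicX ?hI.2 // => /eqP hXe.
by move: h0; rewrite hXe hornerX eqxx.
Qed.

Lemma key p (h : {poly 'F_p}) (hI : monic_irreducible_poly h) z D :
  h.[0] != 0 -> exists (m : {poly 'F_p}) (mI : monic_irreducible_poly m),
    [/\ m.[0] != 0, (1 < size m)%N & a_inv hI D z = a_inv mI D 1].
Proof.
move=> h0; set s := tbar hI ^+ z.
have s0 : s != 0 by rewrite expf_neq0 // tbar_neq0.
have [q [q0 qr]] := ev_root_exists s0.
have [m [mm mr mmin]] := min_root (leqnn _) q0 qr.
have mirr := min_irr mm mr mmin.
pose mI : monic_irreducible_poly m := (mirr, mm).
exists m, mI; split; [exact: (min_0 s0 mirr mm mr) | exact: mirr.1 |].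
by rewrite !a_invE expr1 (rank_phi mI mr).
Qed.

Lemma keyA p (h : {poly 'F_p}) (hI : monic_irreducible_poly h) z D :
  admissible h -> exists (m : {poly 'F_p}) (mI : monic_irreducible_poly m),
    admissible m /\ a_inv hI D z = a_inv mI D 1.
Proof.
move=> [pp po h0 hb].
have [m [mI [m0 sm e]]] := key hI z D h0.
exists m, mI; split => //; split => //.
by rewrite /breadth -subn1 subn_gt0.
Qed.

Lemma a_inv_le p (h : {poly 'F_p}) (hI : monic_irreducible_poly h) z D :
  (a_inv hI D z <= narcs D)%N.
Proof. by rewrite a_invE (leq_trans (leq_pred _)) ?leq_subr. Qed.

Lemma max_exists (P : nat -> Prop) B k0 : P k0 -> (forall k, P k -> k <= B)%N ->
  exists k, P k /\ forall k', P k' -> (k' <= k)%N.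
Proof.
elim: B k0 => [|B IH] k0 Pk0 hb.
  by exists k0; split => // k' /hb; rewrite leqn0 => /eqP ->.
case: (classic (P B.+1)) => [PB|nPB].
  by exists B.+1; split.
apply: (IH k0 Pk0) => k Pk.
have := hb k Pk; rewrite leq_eqVlt => /orP [/eqP ek|//].
by rewrite ek in Pk.
Qed.

Definition h3 : {poly 'F_3} := 'X - (-1)%:P.
Lemma h3I : monic_irreducible_poly h3.
Proof. split; [exact: irredp_XsubC | exact: monicXsubC]. Qed.
Lemma h3adm : admissible h3.
Proof.
split => //; last by rewrite /breadth size_XsubC.
by rewrite /h3 !hornerE opprK oner_neq0.
Qed.

Theorem lemma8p1 :
  (* main (precise) statement *)
  (forall D : diagram, well_formed D ->
   forall (p : nat) (h : {poly 'F_p}) (hI : monic_irreducible_poly h) (z : nat),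
     admissible h -> (1 <= z)%N ->
     exists (h' : {poly 'F_p}) (hI' : monic_irreducible_poly h'),
       admissible h' /\ (a_inv hI D z <= a_inv hI' D 1)%N)
  /\
  (* A_Q(L) = sup_X a_X(L, P_m, 1): both suprema (over z >= 0) bound the same naturals *)
  (forall D : diagram, well_formed D -> forall k : nat,
     (exists (p : nat) (h : {poly 'F_p}) (hI : monic_irreducible_poly h) (z : nat),
        admissible h /\ (k <= a_inv hI D z)%N) <->
     (exists (p : nat) (h : {poly 'F_p}) (hI : monic_irreducible_poly h),
        admissible h /\ (k <= a_inv hI D 1)%N))
  /\
  (* for knots the supremum A_Q(K) is attained as some a_X(K,1) *)
  (forall D : diagram, well_formed D -> is_knot_diagram D ->
     exists (p : nat) (h : {poly 'F_p}) (hI : monic_irreducible_poly h),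
       admissible h /\
       forall (p' : nat) (h' : {poly 'F_p'}) (hI' : monic_irreducible_poly h') (z : nat),
         admissible h' -> (a_inv hI' D z <= a_inv hI D 1)%N).
Proof.
split; [|split].
- move=> D _ p h hI z ad _.
  have [m [mI [adm e]]] := keyA hI z D ad.
  by exists m, mI; rewrite e.
- move=> D _ k; split.
    move=> [p [h [hI [z [ad hk]]]]].
    have [m [mI [adm e]]] := keyA hI z D ad.
    by exists p, m, mI; rewrite -e.
  move=> [p [h [hI [ad hk]]]].
  by exists p, h, hI, 1%N.
- move=> D _ _.
  pose P k := exists (p : nat) (h : {poly 'F_p}) (hI : monic_irreducible_poly h) (z : nat),
    admissible h /\ (k <= a_inv hI D z)%N.
  have P0 : P 0%N by exists 3%N, h3, h3I, 0%N; split; [exact: h3adm|].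
  have hb : forall k, P k -> (k <= narcs D)%N.
    by move=> k [p [h [hI [z [_ hk]]]]]; apply: leq_trans hk (a_inv_le _ _ _).
  have [k [[p [h [hI [z [ad hk]]]]] kmax]] := max_exists P0 hb.
  have [m [mI [adm e]]] := keyA hI z D ad.
  exists p, m, mI; split => // p' h' hI' z' ad'.
  rewrite -e; apply: leq_trans hk.
  by apply: kmax; exists p', h', hI', z'.
Qed.
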